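(* Let $\alpha,\beta\in\mathsf{Lab}\uplus\underline{\mathsf{Lab}}$ with $\mathsf{und}(\alpha)=(p_\alpha,Rd_\alpha,Wt_\alpha)$, $\mathsf{und}(\beta)=(p_\beta,Rd_\beta,Wt_\beta)$, $Wt_\alpha\subseteq Rd_\alpha$, $Wt_\beta\subseteq Rd_\beta$ and $\alpha\;\iota_{lab}\;\beta$. Suppose $A\to_{ann}^{\alpha}A'$ and $A\to_{ann}^{\beta}A''$. Then $A''\to_{ann}^{\alpha}A'''$ where $A'''=A''\odot^{\alpha}\mathsf{diff}(A\to_{ann}^{\alpha}A')$.
   Context: Fix a set $\mathcal{R}$ of memory resources. Let $\mathsf{PID}=(\mathbb{N}_+)^*$ be the set of finite words over the positive integers, with $\preceq$ the prefix order. An annotation DAG is a triple $A=(V,E_R,E_W)$ such that: (1) $V\subseteq(\mathsf{PID}\times\mathbb{N})\cup\{\bot\}$ is finite, $\bot\in V$, and $(p,n)\in V$ implies $(p,n')\in V$ for all $n'\le n$; (2) $E_R,E_W\subseteq V\times\mathcal{R}\times V$, and $(v',r,v),(v'',r,v)\in E_R\cup E_W$ implies $v'=v''$; (3) $E_R\cap E_W=\varnothing$ and the directed graph $(V,E_R\cup E_W)$ is acyclic; (4) if $(v',r,v)\in E_W$ and $v'\neq\bot$ then $(v'',r,v')\in E_W$ for some $v''$; (5) $(v,r,v'),(v,r,v'')\in E_W$ implies $v'=v''$. For $r\in\mathcal{R}$, $\mathsf{last}(r,E_W)$ is $\bot$ if $E_W$ has no edge labelled $r$, and otherwise is the final node of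 the unique path from $\bot$ consisting of all $E_W$-edges labelled $r$. For $p\in\mathsf{PID}$, $\mathsf{max}_p(V)=\max\{n:(p,n)\in V\}$, or $-1$ if there is no such $n$. Let $\mathsf{Lab}=\mathsf{PID}\times2^{\mathcal{R}}\times2^{\mathcal{R}}$ and $\underline{\mathsf{Lab}}=\{\underline{a}:a\in\mathsf{Lab}\}$ a disjoint copy; $\mathsf{und}(a)=\mathsf{und}(\underline a)=a$. For $a=(p,Rd,Wt)\in\mathsf{Lab}$ and annotation DAGs $A_1=(V_1,E_{R1},E_{W1})$, $A_2=(V_2,E_{R2},E_{W2})$, write $A_1\to_{ann}^{a}A_2$ iff, with $v=(p,\mathsf{max}_p(V_1)+1)$ and $\mathsf{newedge}(r,E_W,v)=(\mathsf{last}(r,E_W),r,v)$: $V_2=V_1\cup\{v\}$, $E_{R2}=E_{R1}\cup\{\mathsf{newedge}(r,E_{W1},v): r\in Rd\setminus Wt\}$, $E_{W2}=E_{W1}\cup\{\mathsf{newedge}(r,E_{W1},v): r\in Wt\}$; and write $A_2\to_{ann}^{\underline a}A_1$ iff $A_1\to_{ann}^{a}A_2$. For $\alpha,\beta\in\mathsf{Lab}\uplus\underline{\mathsf{Lab}}$ with $\mathsf{und}(\alpha)=(p_1,Rd_1,Wt_1)$, $\mathsf{und}(\beta)=(p_2,Rd_2,Wt_2)$, define $\alpha\;\iota_{lab}\;\beta$ iff $p_1\not\preceq p_2$, $p_2\not\preceq p_1$, $Rd_1\cap Wt_2=\varnothing$ and $Rd_2\cap Wt_1=\varnothing$. For $o:(V,E_R,E_W)\to_{ann}^{\alpha}(V',E'_R,E'_W)$,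 $\mathsf{diff}(o)=(V'\setminus V,E'_R\setminus E_R,E'_W\setminus E_W)$ if $\alpha\in\mathsf{Lab}$ and $\mathsf{diff}(o)=(V\setminus V',E_R\setminus E'_R,E_W\setminus E'_W)$ if $\alpha\in\underline{\mathsf{Lab}}$. Also $(V,E_R,E_W)\odot^{\alpha}(\Delta V,\Delta E_R,\Delta E_W)$ is $(V\cup\Delta V,E_R\cup\Delta E_R,E_W\cup\Delta E_W)$ if $\alpha\in\mathsf{Lab}$ and $(V\setminus\Delta V,E_R\setminus\Delta E_R,E_W\setminus\Delta E_W)$ if $\alpha\in\underline{\mathsf{Lab}}$. (In the paper, labels arise from basic blocks for which the set of written resources is contained in the set of read resources; this is recorded here as the hypothesis $Wt\subseteq Rd$.) *)

(* Defs.v *)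
From mathcomp Require Import all_boot.
From mathcomp Require Import boolp classical_sets cardinality.
From Stdlib Require Import Relation_Operators.

Set Implicit Arguments.
Unset Strict Implicit.
Unset Printing Implicit Defensive.

Local Open Scope classical_set_scope.

(* Process identifiers: finite words over positive integers, represented as
   sequences of naturals all of whose letters are positive. *)
Definition PID := seq nat.
Definition pid_ok (p : PID) : Prop := all (fun n => 0 < n) p.

Definition pid_le (p q : PID) : Prop := prefix p q.

Definition node := option (PID * nat).
Definition bot : node := None.

Section Ann.
Variable R : Type.   (* the set of memory resources *)

Definition edge := (node * R * node)%type.

Record adag := ADag { aV : set node; aER : set edge; aEW : set edge }.

Definition adj (E : set edge) (x y : node) : Prop := exists r, E (x, r, y).
Definition acyclic (E : set edge) : Prop :=
  forall x, ~ clos_trans node (adj E) x x.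

Definition is_ann_dag (A : adag) : Prop :=
  let V := aV A in let ER := aER A in let EW := aEW A in
  finite_set V /\ V bot /\
  (forall p n, V (Some (p, n)) -> pid_ok p) /\
  (forall p n n', V (Some (p, n)) -> n' <= n -> V (Some (p, n'))) /\
  (forall e, (ER `|` EW) e -> V e.1.1 /\ V e.2) /\
  (forall v' v'' r v, (ER `|` EW) (v', r, v) -> (ER `|` EW) (v'', r, v) -> v' = v'') /\
  ER `&` EW = set0 /\ acyclic (ER `|` EW) /\
  (forall v' r v, EW (v', r, v) -> v' <> bot -> exists v'', EW (v'', r, v')) /\
  (forall v r v' v'', EW (v, r, v') -> EW (v, r, v'') -> v' = v'').

(* v is the final node of a path from bot whose edge set is exactly the set of
   EW-edges labelled r (the empty path, ending in bot, when there is no such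
   edge). *)
Definition is_last (r : R) (EW : set edge) (v : node) : Prop :=
  exists s : seq node,
    (forall x y, EW (x, r, y) <->
       exists i, i < size s /\ nth bot (bot :: s) i = x /\ nth bot s i = y) /\
    v = last bot s.

(* last(r, E_W): well defined (unique) on annotation DAGs. *)
Definition lastw (r : R) (EW : set edge) : node := xget bot (is_last r EW).

(* max_p(V), with None standing for -1. *)
Definition maxp (p : PID) (V : set node) : option nat :=
  xget None (fun o => match o with
    | None => ~ exists n, V (Some (p, n))
    | Some n => V (Some (p, n)) /\ forall m, V (Some (p, m)) -> m <= n
    end).

Definition nextidx (p : PID) (V : set node) : nat :=
  match maxp p V with None => 0 | Some n => n.+1 end.

Definition newedge (r : R) (EW : set edge) (v : node) : edge := (lastw r EW, r, v).

Record lab := Lab { lpid : PID; lrd : set R; lwt : set R }.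
Inductive elab := Fwd of lab | Bwd of lab.   (* Bwd a is the underlined a *)

Definition und (x : elab) : lab := match x with Fwd a => a | Bwd a => a end.

Definition ann_step (a : lab) (A1 A2 : adag) : Prop :=
  is_ann_dag A1 /\ is_ann_dag A2 /\
  let v : node := Some (lpid a, nextidx (lpid a) (aV A1)) in
  aV A2 = aV A1 `|` [set v] /\
  aER A2 = aER A1 `|` [set newedge r (aEW A1) v | r in lrd a `\` lwt a] /\
  aEW A2 = aEW A1 `|` [set newedge r (aEW A1) v | r in lwt a].

Definition ann (x : elab) (A1 A2 : adag) : Prop :=
  match x with
  | Fwd a => ann_step a A1 A2
  | Bwd a => ann_step a A2 A1
  end.

Definition iota_lab (x y : elab) : Prop :=
  let: Lab p1 Rd1 Wt1 := und x in
  let: Lab p2 Rd2 Wt2 := und y in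
  ~ pid_le p1 p2 /\ ~ pid_le p2 p1 /\ Rd1 `&` Wt2 = set0 /\ Rd2 `&` Wt1 = set0.

Definition diff (x : elab) (A A' : adag) : adag :=
  match x with
  | Fwd _ => ADag (aV A' `\` aV A) (aER A' `\` aER A) (aEW A' `\` aEW A)
  | Bwd _ => ADag (aV A `\` aV A') (aER A `\` aER A') (aEW A `\` aEW A')
  end.

Definition odot (x : elab) (A D : adag) : adag :=
  match x with
  | Fwd _ => ADag (aV A `|` aV D) (aER A `|` aER D) (aEW A `|` aEW D)
  | Bwd _ => ADag (aV A `\` aV D) (aER A `\` aER D) (aEW A `\` aEW D)
  end.

End Ann.

(* Main.v *)
Require Import Defs.
From mathcomp Require Import all_boot.
From mathcomp Require Import boolp classical_sets cardinality finmap.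
From Stdlib Require Import Relation_Operators Operators_Properties.
Local Open Scope classical_set_scope.
Set Implicit Arguments.
Unset Strict Implicit.

Lemma slice_bounded (V : set node) p : finite_set V ->
  exists b, forall n, V (Some (p, n)) -> (n <= b)%N.
Proof.
move=> fV.
have : finite_set ((fun o : node => if o is Some (_, n) then n else 0%N) @` V).
  exact: finite_image.
move=> /finite_fsetP[X HX].
exists (\max_(i <- X) i)%N => n Vn.
have : n \in X.
  have : ((fun o : node => if o is Some (_, n) then n else 0%N) @` V) n.
    by exists (Some (p, n)).
  by rewrite HX.
move=> nX; exact: (@leq_bigmax_seq _ _ xpredT id n nX).
Qed.

Definition maxpP (p : PID) (V : set node) (o : option nat) : Prop :=
  match o with
  | None => ~ exists n, V (Some (p, n))
  | Some n => V (Some (p, n)) /\ forall m, V (Some (p, m)) -> (m <= n)%N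
  end.

Lemma maxp_spec (V : set node) p : finite_set V -> maxpP p V (maxp p V).
Proof.
move=> fV; rewrite /maxp; apply: (@xgetPex _ None (maxpP p V)).
have [[n Vn]|N] := pselect (exists n, V (Some (p, n))); last by exists None.
have [b Hb] := slice_bounded p fV.
have ex : exists n, (fun n => `[< V (Some (p, n)) >]) n by exists n; apply/asboolP.
have [m /asboolP Vm Hm] := ex_maxnP ex (fun n (H : `[< V (Some (p, n)) >]) => Hb n (asboolW H)).
exists (Some m); split => // k Vk; apply: Hm; exact/asboolP.
Qed.

Lemma next_gt (V : set node) p n : finite_set V -> V (Some (p, n)) -> (n < nextidx p V)%N.
Proof.
move=> fV Vn; rewrite /nextidx; have := maxp_spec p fV; rewrite /maxpP.
case: (maxp p V) => [m [_ H]|H]; first by rewrite ltnS H.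
by exfalso; apply: H; exists n.
Qed.

Lemma nextidx_ext p (V1 V2 : set node) :
  (forall n, V1 (Some (p, n)) <-> V2 (Some (p, n))) -> nextidx p V1 = nextidx p V2.
Proof.
move=> H; rewrite /nextidx.
have -> : maxp p V1 = maxp p V2; last by [].
change (xget None (maxpP p V1) = xget None (maxpP p V2)); congr xget.
apply: funext => -[n|] /=; apply: propext; rewrite /maxpP.
- split=> -[A B]; split.
  + exact: (proj1 (H n) A).
  + by move=> m /H; exact: B.
  + exact: (proj2 (H n) A).
  + by move=> m /H; exact: B.
- by split=> N [n /H ?]; apply: N; exists n.
Qed.

Section Gen.
Variable R : Type.
Implicit Types (A X Y : adag R) (E : set (edge R)).

Lemma lastw_ext r E1 E2 : (forall x y, E1 (x, r, y) <-> E2 (x, r, y)) ->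
  lastw r E1 = lastw r E2.
Proof.
move=> H; change (xget bot (is_last r E1) = xget bot (is_last r E2)); congr xget.
apply: funext => v; apply: propext; split=> -[s [Hs Hv]]; exists s; split=> // x y.
- by rewrite -H.
- by rewrite H.
Qed.

Lemma lastw_some r E z : lastw r E = Some z -> exists y, E (y, r, Some z).
Proof.
rewrite /lastw.
have [ex|N] := pselect (exists v, is_last r E v); last first.
  by rewrite xgetPN // => v Hv; apply: N; exists v.
have [s [Hs Hv]] := xgetPex bot ex; rewrite Hv.
case/lastP: s Hs {Hv} => [|s' w] Hs //; rewrite last_rcons => Ew; subst w.
exists (nth bot (bot :: rcons s' (Some z)) (size s')); apply/Hs.
exists (size s'); split; first by rewrite size_rcons.
by split=> //; rewrite nth_rcons ltnn eqxx.
Qed.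

Lemma dag_fin A : is_ann_dag A -> finite_set (aV A).
Proof. by case. Qed.
Lemma dag_bot A : is_ann_dag A -> aV A bot.
Proof. by case=> _ []. Qed.
Lemma dag_ends A : is_ann_dag A -> forall e, (aER A `|` aEW A) e -> aV A e.1.1 /\ aV A e.2.
Proof. by case=> _ [_ [_ [_ []]]]. Qed.
Lemma dag_acyc A : is_ann_dag A -> acyclic (aER A `|` aEW A).
Proof. by case=> _ [_ [_ [_ [_ [_ [_ []]]]]]]. Qed.

Definition nv (a : lab R) X : node := Some (lpid a, nextidx (lpid a) (aV X)).

Section Step.
Variables (a : lab R) (X Y : adag R).
Hypothesis st : ann_step a X Y.
Hypothesis wr : lwt a `<=` lrd a.

Lemma stepV x : aV Y x <-> aV X x \/ x = nv a X.
Proof. by case: st => _ [_ [-> _]]. Qed.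
Lemma stepER e : aER Y e <-> aER X e \/
  exists2 r, (lrd a `\` lwt a) r & e = (lastw r (aEW X), r, nv a X).
Proof.
case: st => _ [_ [_ [-> _]]]; by split=> -[H|[r Hr E]]; [left|right; exists r|left|right; exists r] => //; subst e.
Qed.
Lemma stepEW e : aEW Y e <-> aEW X e \/
  exists2 r, lwt a r & e = (lastw r (aEW X), r, nv a X).
Proof.
case: st => _ [_ [_ [_ ->]]]; by split=> -[H|[r Hr E]]; [left|right; exists r|left|right; exists r] => //; subst e.
Qed.
Lemma dagX : is_ann_dag X. Proof. by case: st. Qed.
Lemma dagY : is_ann_dag Y. Proof. by case: st => _ []. Qed.

Lemma step_nvX : ~ aV X (nv a X).
Proof. by move=> /(next_gt (dag_fin dagX)); rewrite ltnn. Qed.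

Lemma stepV' x : aV X x <-> aV Y x /\ x <> nv a X.
Proof.
split=> [Xx|[/stepV[]//]]; split; first by apply/stepV; left.
by move=> E; apply: step_nvX; rewrite -E.
Qed.

Lemma stepER' e : aER X e <-> aER Y e /\ e.2 <> nv a X.
Proof.
split=> [Xe|[/stepER[//|[r _ ->]]]//]; split; first by apply/stepER; left.
move=> E; apply: step_nvX; rewrite -E; exact: (dag_ends dagX (or_introl Xe)).2.
Qed.
Lemma stepEW' e : aEW X e <-> aEW Y e /\ e.2 <> nv a X.
Proof.
split=> [Xe|[/stepEW[//|[r _ ->]]]//]; split; first by apply/stepEW; left.
move=> E; apply: step_nvX; rewrite -E; exact: (dag_ends dagX (or_intror Xe)).2.
Qed.

Lemma step_noout r w : ~ (aER Y `|` aEW Y) (nv a X, r, w).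
Proof.
have noself : forall r' w', (aER Y `|` aEW Y) (w', r', w') -> False.
  move=> r' w' H; exact: (dag_acyc dagY (@t_step _ _ w' w' (ex_intro _ r' H))).
move=> [/stepER|/stepEW] [H|[r' Hr' [E1 E2 E3]]].
- apply: step_nvX; exact: (dag_ends dagX (or_introl H)).1.
- apply: (noself r' (nv a X)); left; apply/stepER; right; exists r' => //.
  by rewrite -E1.
- apply: step_nvX; exact: (dag_ends dagX (or_intror H)).1.
- apply: (noself r' (nv a X)); right; apply/stepEW; right; exists r' => //.
  by rewrite -E1.
Qed.

Lemma step_labW x r : aEW Y (x, r, nv a X) -> lwt a r.
Proof.
move=> /stepEW[H|[r' Hr E]]; last by case: E => _ ->.
by have := (stepEW' (x, r, nv a X)).1 H => -[_ /=].
Qed.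
Lemma step_labR x r : aER Y (x, r, nv a X) -> lrd a r.
Proof.
move=> /stepER[H|[r' [Hr _] E]]; last by case: E => _ ->.
by have := (stepER' (x, r, nv a X)).1 H => -[_ /=].
Qed.

Lemma step_into x r : (aER Y `|` aEW Y) (x, r, nv a X) ->
  x = lastw r (aEW X) /\ lrd a r.
Proof.
move=> [/stepER[H|[r' [Hr _] E]]|/stepEW[H|[r' Hr E]]].
- by have [_ /=] := (stepER' (x, r, nv a X)).1 H.
- by case: E => -> ->.
- by have [_ /=] := (stepEW' (x, r, nv a X)).1 H.
- case: E => -> ->; split=> //; exact: wr.
Qed.

Lemma step_EWr r x y : ~ lwt a r -> (aEW X (x, r, y) <-> aEW Y (x, r, y)).
Proof.
move=> nr; split=> [H|]; first by apply/stepEW; left.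
move=> /stepEW[//|[r' Hr E]]; exfalso; case: E => _ Er _; subst r'; exact: nr.
Qed.

Lemma lastw_step r : ~ lwt a r -> lastw r (aEW X) = lastw r (aEW Y).
Proof. by move=> nr; apply: lastw_ext => x y; apply: step_EWr. Qed.

End Step.
End Gen.
Arguments stepV {R a X Y}.
Arguments stepER {R a X Y}.
Arguments stepEW {R a X Y}.
Arguments dagX {R a X Y}.
Arguments dagY {R a X Y}.
Arguments step_nvX {R a X Y}.
Arguments stepV' {R a X Y}.
Arguments stepER' {R a X Y}.
Arguments stepEW' {R a X Y}.
Arguments step_noout {R a X Y}.
Arguments step_labW {R a X Y}.
Arguments step_labR {R a X Y}.
Arguments step_into {R a X Y}.
Arguments step_EWr {R a X Y}.
Arguments lastw_step {R a X Y}.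

Lemma ct_mono T (R1 R2 : T -> T -> Prop) x y :
  (forall a b, R1 a b -> R2 a b) -> clos_trans T R1 x y -> clos_trans T R2 x y.
Proof.
move=> H; elim=> [a b /H|a b c _ IH1 _ IH2]; first exact: t_step.
exact: t_trans IH1 IH2.
Qed.

Lemma ct_out T (R1 : T -> T -> Prop) x y : clos_trans T R1 x y -> exists c, R1 x c.
Proof. by elim=> [a b H|a b c _ [d Hd] _ _]; [exists b|exists d]. Qed.

Lemma ct_restrict T (R1 R2 : T -> T -> Prop) x y :
  (forall a b, R1 a b -> (exists c, R1 b c) -> R2 a b) ->
  clos_trans T R1 x y -> (exists c, R1 y c) -> clos_trans T R2 x y.
Proof.
move=> H ct0; have ct := @clos_trans_t1n _ _ _ _ ct0; clear ct0; elim: ct => [a b Hab Hb|a b c Hab Hbc IH Hc].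
  by apply: t_step; apply: H.
apply: t_trans (IH Hc); apply: t_step; apply: H Hab _.
by case: Hbc => [d Hd|d e Hd _]; exists d.
Qed.

Section Gen2.
Variable R : Type.
Implicit Types (A X Y Z : adag R) (E : set (edge R)).

Lemma dag_remove (Xr Y : adag R) (v : node) :
 is_ann_dag Y -> v <> bot ->
 (forall x, aV Xr x <-> aV Y x /\ x <> v) ->
 (forall e, aER Xr e <-> aER Y e /\ e.2 <> v) ->
 (forall e, aEW Xr e <-> aEW Y e /\ e.2 <> v) ->
 (forall r w, ~ (aER Y `|` aEW Y) (v, r, w)) ->
 (forall p n n', aV Xr (Some (p, n)) -> (n' <= n)%N -> Some (p, n') <> v) ->
 is_ann_dag Xr.
Proof.
move=> [fin [bt [pok [down [ends [uni [disj [acyc [pred wun]]]]]]]]].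
move=> vbot hV hER hEW noout hdown.
have sub : forall e, (aER Xr `|` aEW Xr) e -> (aER Y `|` aEW Y) e /\ e.2 <> v.
  by move=> e [/hER[? ?]|/hEW[? ?]]; split=> //; [left|right].
split; first by apply: sub_finite_set fin => x /hV[].
split; first by apply/hV; split=> // E; apply: vbot.
split; first by move=> p n /hV[/pok].
split.
  move=> p n n' /[dup] Vn /hV[Vy ne] le; apply/hV; split; first exact: down Vy le.
  exact: hdown Vn le.
split.
  move=> [[x r] y] /sub[Ey ne]; have [e1 e2] := ends _ Ey; split; apply/hV => //.
  by split=> // E; apply: (noout r y); rewrite -E.
split; first by move=> v' v'' r w /sub[H1 _] /sub[H2 _]; exact: uni H1 H2.
split.
  rewrite -subset0 => e [/hER[H1 _] /hEW[H2 _]].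
  have : (aER Y `&` aEW Y) e by split.
  by rewrite disj.
split.
  move=> x ct; apply: (acyc x); apply: ct_mono ct => a b [r /sub[H _]]; by exists r.
split.
  move=> v' r w /hEW[Hw _] nb; have [v'' H] := pred _ _ _ Hw nb.
  exists v''; apply/hEW; split => //= E; apply: (noout r w); rewrite -E; by right.
by move=> x r y y' /hEW[H1 _] /hEW[H2 _]; exact: wun H1 H2.
Qed.

Lemma dag_union Z Y1 Y2 (v1 v2 : node) :
 is_ann_dag Y1 -> is_ann_dag Y2 -> v1 <> v2 ->
 (forall x, aV Z x <-> aV Y1 x \/ aV Y2 x) ->
 (forall e, aER Z e <-> aER Y1 e \/ aER Y2 e) ->
 (forall e, aEW Z e <-> aEW Y1 e \/ aEW Y2 e) ->
 (forall e, aER Y1 e -> e.2 <> v1 -> aER Y2 e) ->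
 (forall e, aEW Y1 e -> e.2 <> v1 -> aEW Y2 e) ->
 (forall e, aER Y2 e -> e.2 <> v2 -> aER Y1 e) ->
 (forall e, aEW Y2 e -> e.2 <> v2 -> aEW Y1 e) ->
 (forall r w, ~ (aER Z `|` aEW Z) (v1, r, w)) ->
 (forall r w, ~ (aER Z `|` aEW Z) (v2, r, w)) ->
 (forall x y r, aEW Y1 (x, r, v1) -> aEW Y2 (y, r, v2) -> False) ->
 is_ann_dag Z.
Proof.
move=> [fin1 [bt1 [pok1 [down1 [ends1 [uni1 [disj1 [acyc1 [pred1 wun1]]]]]]]]].
move=> [fin2 [bt2 [pok2 [down2 [ends2 [uni2 [disj2 [acyc2 [pred2 wun2]]]]]]]]].
move=> v12 hV hER hEW R12 W12 R21 W21 no1 no2 conf.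
have toR1 e : aER Z e -> e.2 <> v2 -> aER Y1 e by move=> /hER[//|H ne]; exact: R21.
have toW1 e : aEW Z e -> e.2 <> v2 -> aEW Y1 e by move=> /hEW[//|H ne]; exact: W21.
have toR2 e : aER Z e -> e.2 <> v1 -> aER Y2 e by move=> /hER[H ne|//]; exact: R12.
have toW2 e : aEW Z e -> e.2 <> v1 -> aEW Y2 e by move=> /hEW[H ne|//]; exact: W12.
have to1 e : (aER Z `|` aEW Z) e -> e.2 <> v2 -> (aER Y1 `|` aEW Y1) e.
  by move=> [H|H] ne; [left; apply: toR1|right; apply: toW1].
have to2 e : (aER Z `|` aEW Z) e -> e.2 <> v1 -> (aER Y2 `|` aEW Y2) e.
  by move=> [H|H] ne; [left; apply: toR2|right; apply: toW2].
have v21 : v2 <> v1 by move=> E; apply: v12.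
split.
  apply: (@sub_finite_set _ _ (aV Y1 `|` aV Y2)); first by move=> x /hV.
  by rewrite finite_setU.
split; first by apply/hV; left.
split; first by move=> p n /hV[/pok1|/pok2].
split.
  move=> p n n' /hV[H|H] le; apply/hV; [left; exact: down1 H le|right; exact: down2 H le].
split.
  move=> e [/hER[H|H]|/hEW[H|H]].
  - by have [? ?] := ends1 e (or_introl H); split; apply/hV; left.
  - by have [? ?] := ends2 e (or_introl H); split; apply/hV; right.
  - by have [? ?] := ends1 e (or_intror H); split; apply/hV; left.
  - by have [? ?] := ends2 e (or_intror H); split; apply/hV; right.
split.
  move=> v' v'' r w H1 H2; have [E|ne] := pselect (w = v2).
    subst w; apply: uni2 (to2 _ H1 v21) (to2 _ H2 v21).
  exact: uni1 (to1 _ H1 ne) (to1 _ H2 ne).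
split.
  rewrite -subset0 => e [H1 H2]; have [E|ne] := pselect (e.2 = v2).
    have : (aER Y2 `&` aEW Y2) e by split; [apply: toR2|apply: toW2]; rewrite // E.
    by rewrite disj2.
  have : (aER Y1 `&` aEW Y1) e by split; [apply: toR1|apply: toW1].
  by rewrite disj1.
split.
  move=> x ct; apply: (acyc1 x); apply: (ct_restrict _ ct (ct_out ct)).
  move=> a b [r H] [c [r' Hc]]; exists r; apply: to1 H _ => /= E.
  by apply: (no2 r' c); rewrite -E.
split.
  move=> v' r w /hEW[H|H] nb.
  - by have [v'' ?] := pred1 _ _ _ H nb; exists v''; apply/hEW; left.
  - by have [v'' ?] := pred2 _ _ _ H nb; exists v''; apply/hEW; right.
move=> x r t1 t2 H1 H2.
have [e1|n1] := pselect (t1 = v2); have [e2|n2] := pselect (t2 = v2).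
- by rewrite e1 e2.
- subst t1; have [e2'|n2'] := pselect (t2 = v1).
    subst t2; exfalso; apply: (conf x x r); [exact: toW1 H2 v12|exact: toW2 H1 v21].
  exact: wun2 (toW2 _ H1 v21) (toW2 _ H2 n2').
- subst t2; have [e1'|n1'] := pselect (t1 = v1).
    subst t1; exfalso; apply: (conf x x r); [exact: toW1 H1 v12|exact: toW2 H2 v21].
  exact: wun2 (toW2 _ H1 n1') (toW2 _ H2 v21).
- exact: wun1 (toW1 _ H1 n1) (toW1 _ H2 n2).
Qed.

Lemma mk_step (a : lab R) X Y u (L : R -> node) :
 is_ann_dag X -> is_ann_dag Y -> u = nv a X ->
 (forall r, lrd a r -> L r = lastw r (aEW X)) -> lwt a `<=` lrd a ->
 (forall x, aV Y x <-> aV X x \/ x = u) ->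
 (forall e, aER Y e <-> aER X e \/ exists2 r, (lrd a `\` lwt a) r & e = (L r, r, u)) ->
 (forall e, aEW Y e <-> aEW X e \/ exists2 r, lwt a r & e = (L r, r, u)) ->
 ann_step a X Y.
Proof.
move=> dX dY eu hL wr hV hER hEW; rewrite /nv in eu; split=> //; split=> //=.
split; first by apply: funext => x; apply: propext; rewrite hV -eu.
split.
  apply: funext => e; apply: propext; rewrite hER /newedge -eu.
  split=> -[H|[r Hr E]]; [by left|right; exists r => //|by left|right; exists r => //].
  - by rewrite E hL //; case: Hr.
  - by rewrite -E hL //; case: Hr.
apply: funext => e; apply: propext; rewrite hEW /newedge -eu.
split=> -[H|[r Hr E]]; [by left|right; exists r => //|by left|right; exists r => //].
- by rewrite E hL //; apply: wr.
- by rewrite -E hL //; apply: wr.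
Qed.

End Gen2.

Ltac dec P := let H := fresh in have [H|H] := pselect P.
Lemma uD1 (P Q S : Prop) : (S -> P) -> (S -> Q) -> (P \/ (Q /\ ~S) <-> Q \/ P).
Proof. move=> h1 h2; dec S; tauto. Qed.
Lemma uDN (P Q S N : Prop) : (Q <-> S \/ N) -> (N -> ~S) -> (P \/ (Q /\ ~S) <-> P \/ N).
Proof. move=> h1 h2; dec S; dec N; tauto. Qed.
Lemma uR (P Q S N : Prop) : (Q <-> S /\ ~N) -> (P -> N -> S) -> (P /\ ~(S /\ ~Q) <-> P /\ ~N).
Proof. move=> h1 h2; dec S; dec N; dec Q; tauto. Qed.
Lemma uR2 (P Q S N : Prop) : (P <-> S /\ ~N) -> (S -> Q) -> (Q -> ~S -> ~N) ->
  (P \/ (Q /\ ~S) <-> Q /\ ~N).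
Proof. move=> h1 h2 h3; dec S; dec N; tauto. Qed.
Lemma uM (P N M : Prop) : (P -> N -> M) -> (M -> P) -> (P <-> (P /\ ~N) \/ M).
Proof. move=> h1 h2; dec N; tauto. Qed.

Lemma iota_facts R (x y : elab R) : iota_lab x y ->
  [/\ ~ pid_le (lpid (und x)) (lpid (und y)), ~ pid_le (lpid (und y)) (lpid (und x)),
      lrd (und x) `&` lwt (und y) = set0 & lrd (und y) `&` lwt (und x) = set0].
Proof. by case: x => -[p1 r1 w1]; case: y => -[p2 r2 w2]; rewrite /iota_lab /= => -[? [? [? ?]]]. Qed.

Theorem mainTheorem5 (R : Type) (alpha beta : elab R) (A A' A'' : adag R) :
  pid_ok (lpid (und alpha)) -> pid_ok (lpid (und beta)) ->
  lwt (und alpha) `<=` lrd (und alpha) ->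
  lwt (und beta) `<=` lrd (und beta) ->
  iota_lab alpha beta ->
  ann alpha A A' -> ann beta A A'' ->
  ann alpha A'' (odot alpha A'' (diff alpha A A')).
Proof.
move=> _ _ wra wrb /iota_facts [nab nba dab dba].
case: alpha wra nab nba dab dba => a; case: beta wrb => b /= wrb wra nab nba dab dba sa sb.
all: have pab : lpid a <> lpid b by move=> E; apply: nab; rewrite E /pid_le prefix_refl.
all: have nvne : forall X Y, nv a X <> nv b Y by move=> X Y [].
all: have dab' : forall r, lrd a r -> lwt b r -> False by
  move=> r h1 h2; have : (lrd a `&` lwt b) r by []; rewrite dab.
all: have dba' : forall r, lrd b r -> lwt a r -> False by
  move=> r h1 h2; have : (lrd b `&` lwt a) r by []; rewrite dba.
-
  have dZ : is_ann_dag (ADag (aV A'' `|` (aV A' `\` aV A))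
     (aER A'' `|` (aER A' `\` aER A)) (aEW A'' `|` (aEW A' `\` aEW A))).
    apply: (@dag_union _ _ A' A'' (nv a A) (nv b A) (dagY sa) (dagY sb) (nvne _ _)).
    + move=> x /=; apply: uD1 => h; [apply/(stepV sb)|apply/(stepV sa)]; by left.
    + move=> e /=; apply: uD1 => h; [apply/(stepER sb)|apply/(stepER sa)]; by left.
    + move=> e /=; apply: uD1 => h; [apply/(stepEW sb)|apply/(stepEW sa)]; by left.
    + move=> e h ne; apply/(stepER sb); left; exact: ((stepER' sa e).2 (conj h ne)).
    + move=> e h ne; apply/(stepEW sb); left; exact: ((stepEW' sa e).2 (conj h ne)).
    + move=> e h ne; apply/(stepER sa); left; exact: ((stepER' sb e).2 (conj h ne)).
    + move=> e h ne; apply/(stepEW sa); left; exact: ((stepEW' sb e).2 (conj h ne)).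
    + move=> r w /= [[h|[h _]]|[h|[h _]]].
      * have := (dag_ends (dagY sb) (or_introl h)).1 => /= /(stepV sb) [];
          [exact: step_nvX sa|exact: nvne].
      * exact: step_noout sa r w (or_introl h).
      * have := (dag_ends (dagY sb) (or_intror h)).1 => /= /(stepV sb) [];
          [exact: step_nvX sa|exact: nvne].
      * exact: step_noout sa r w (or_intror h).
    + move=> r w /= [[h|[h _]]|[h|[h _]]].
      * exact: step_noout sb r w (or_introl h).
      * have := (dag_ends (dagY sa) (or_introl h)).1 => /= /(stepV sa) [];
          [exact: step_nvX sb|move=> E; exact: nvne (esym E)].
      * exact: step_noout sb r w (or_intror h).
      * have := (dag_ends (dagY sa) (or_intror h)).1 => /= /(stepV sa) [];
          [exact: step_nvX sb|move=> E; exact: nvne (esym E)].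
    + move=> x y r h1 h2; exact: dab' r (wra _ (step_labW sa _ _ h1)) (step_labW sb _ _ h2).
  apply: (@mk_step _ a A'' _ (nv a A) (fun r => lastw r (aEW A)) (dagY sb) dZ).
  + rewrite {2}/nv; congr (Some (_, _)); apply: nextidx_ext => n.
    split=> [h|/(stepV sb)[//|]]; first by apply/(stepV sb); left.
    by rewrite /nv => -[E _]; exfalso; exact: pab E.
  + move=> r hr /=; apply: (@lastw_step _ b A A'' sb r) => h; exact: dab' r hr h.
  + exact: wra.
  + move=> x /=; apply: uDN; [exact: (stepV sa x)|move=> ->; exact: step_nvX sa].
  + move=> e /=; apply: uDN; [exact: (stepER sa e)|move=> [r _ ->] h].
    exact: ((stepER' sa _).1 h).2 erefl.
  + move=> e /=; apply: uDN; [exact: (stepEW sa e)|move=> [r _ ->] h].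
    exact: ((stepEW' sa _).1 h).2 erefl.
-
  pose Z := ADag (aV A'' `|` (aV A' `\` aV A)) (aER A'' `|` (aER A' `\` aER A))
     (aEW A'' `|` (aEW A' `\` aEW A)).
  have ab : nv b A'' <> nv a A by move=> E; exact: nvne (esym E).
  have dZ : is_ann_dag Z.
    apply: (@dag_remove _ Z A' (nv b A'') (dagY sa)); first by rewrite /nv.
    + move=> x /=; apply: uR2; first exact: (stepV' sb x).
      * by move=> h; apply/(stepV sa); left.
      * by move=> _ ns E; apply: ns; rewrite E; apply/(stepV sb); right.
    + move=> e /=; apply: uR2; first exact: (stepER' sb e).
      * by move=> h; apply/(stepER sa); left.
      * move=> q ns E; apply: ns; apply/(stepER' sa); split=> //; rewrite E; exact: ab.
    + move=> e /=; apply: uR2; first exact: (stepEW' sb e).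
      * by move=> h; apply/(stepEW sa); left.
      * move=> q ns E; apply: ns; apply/(stepEW' sa); split=> //; rewrite E; exact: ab.
    + move=> r w h; have [E|ne] := pselect (w = nv a A).
      * subst w; have [E1 hr] := step_into sa wra _ _ h; rewrite /nv in E1.
        have [y hy] := lastw_some (esym E1); exact: dab' r hr (step_labW sb _ _ hy).
      * apply: (step_noout sb r w); case: h => h;
          [left; exact: ((stepER' sa _).2 (conj h ne))|right; exact: ((stepEW' sa _).2 (conj h ne))].
    + move=> p n n' /= h le E; rewrite /nv in E; case: E => Ep En; subst p n'.
      case: h => [h|[h1 h2]].
      * by have := next_gt (dag_fin (dagX sb)) h; rewrite ltnNge le.
      * case/(stepV sa): h1 => [//|]; rewrite /nv => -[E _]; exact: pab (esym E).
  apply: (@mk_step _ a A'' Z (nv a A) (fun r => lastw r (aEW A)) (dagX sb) dZ).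
  + rewrite /nv; congr (Some (_, _)); apply: nextidx_ext => n; rewrite (stepV' sb).
    split=> [h|[]//]; split=> //; rewrite /nv => -[E _]; exact: pab E.
  + move=> r hr /=; apply: esym; apply: (@lastw_step _ b A'' A sb r) => h; exact: dab' r hr h.
  + exact: wra.
  + move=> x /=; apply: uDN; [exact: (stepV sa x)|move=> ->; exact: step_nvX sa].
  + move=> e /=; apply: uDN; [exact: (stepER sa e)|move=> [r _ ->] h].
    exact: ((stepER' sa _).1 h).2 erefl.
  + move=> e /=; apply: uDN; [exact: (stepEW sa e)|move=> [r _ ->] h].
    exact: ((stepEW' sa _).1 h).2 erefl.
-
  pose Z := ADag (aV A'' `\` (aV A `\` aV A')) (aER A'' `\` (aER A `\` aER A'))
     (aEW A'' `\` (aEW A `\` aEW A')).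
  have ab : nv a A' <> nv b A by exact: nvne.
  have hV : forall x, aV Z x <-> aV A'' x /\ x <> nv a A'.
    move=> x /=; apply: uR; first exact: (stepV' sa x).
    by move=> _ ->; apply/(stepV sa); right.
  have hER : forall e, aER Z e <-> aER A'' e /\ e.2 <> nv a A'.
    move=> e /=; apply: uR; first exact: (stepER' sa e).
    by move=> h E; apply: ((stepER' sb e).2 (conj h _)); rewrite E.
  have hEW : forall e, aEW Z e <-> aEW A'' e /\ e.2 <> nv a A'.
    move=> e /=; apply: uR; first exact: (stepEW' sa e).
    by move=> h E; apply: ((stepEW' sb e).2 (conj h _)); rewrite E.
  have dZ : is_ann_dag Z.
    apply: (@dag_remove _ Z A'' (nv a A') (dagY sb) _ hV hER hEW).
    + by rewrite /nv.
    + move=> r w h; have [E|ne] := pselect (w = nv b A).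
      * subst w; have [E1 hr] := step_into sb wrb _ _ h; rewrite /nv in E1.
        have [y hy] := lastw_some (esym E1); exact: dba' r hr (step_labW sa _ _ hy).
      * apply: (step_noout sa r w); case: h => h;
          [left; exact: ((stepER' sb _).2 (conj h ne))|right; exact: ((stepEW' sb _).2 (conj h ne))].
    + move=> p n n' /hV [h1 h2] le E; rewrite /nv in E; case: E => Ep En; subst p n'.
      case/(stepV sb): h1 => [h1|]; last by rewrite /nv => -[E _]; exact: pab E.
      have h3 : aV A' (Some (lpid a, n)) by apply/(stepV' sa); split.
      by have := next_gt (dag_fin (dagX sa)) h3; rewrite ltnNge le.
  apply: (@mk_step _ a Z A'' (nv a A') (fun r => lastw r (aEW A')) dZ (dagY sb)).
  + rewrite {1}/nv; congr (Some (_, _)); apply: nextidx_ext => n.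
    rewrite hV (stepV' sa) (stepV sb); split=> [[h ne]|[[h|E] ne]]; split=> //; [by left|].
    by move: E; rewrite /nv => -[E _]; exfalso; exact: pab E.
  + move=> r hr; apply: lastw_ext => x y; rewrite hEW (stepEW' sa) (step_EWr sb) //.
    by move=> h; exact: dab' r hr h.
  + exact: wra.
  + move=> x; rewrite hV; apply: uM => // ->; apply/(stepV sb); left; apply/(stepV sa); by right.
  + move=> e; rewrite hER; apply: uM.
    * move=> h E; have h1 : aER A e by apply/(stepER' sb); split=> //; rewrite E.
      case/(stepER sa): h1 => // h1; exfalso; exact: ((stepER' sa e).1 h1).2 E.
    * by move=> m; apply/(stepER sb); left; apply/(stepER sa); right.
  + move=> e; rewrite hEW; apply: uM.
    * move=> h E; have h1 : aEW A e by apply/(stepEW' sb); split=> //; rewrite E.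
      case/(stepEW sa): h1 => // h1; exfalso; exact: ((stepEW' sa e).1 h1).2 E.
    * by move=> m; apply/(stepEW sb); left; apply/(stepEW sa); right.
-
  pose Z := ADag (aV A'' `\` (aV A `\` aV A')) (aER A'' `\` (aER A `\` aER A'))
     (aEW A'' `\` (aEW A `\` aEW A')).
  have ab : nv a A' <> nv b A'' by exact: nvne.
  have hV : forall x, aV Z x <-> aV A'' x /\ x <> nv a A'.
    move=> x /=; apply: uR; first exact: (stepV' sa x).
    by move=> h _; apply/(stepV sb); left.
  have hER : forall e, aER Z e <-> aER A'' e /\ e.2 <> nv a A'.
    move=> e /=; apply: uR; first exact: (stepER' sa e).
    by move=> h _; apply/(stepER sb); left.
  have hEW : forall e, aEW Z e <-> aEW A'' e /\ e.2 <> nv a A'.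
    move=> e /=; apply: uR; first exact: (stepEW' sa e).
    by move=> h _; apply/(stepEW sb); left.
  have dZ : is_ann_dag Z.
    apply: (@dag_remove _ Z A'' (nv a A') (dagX sb) _ hV hER hEW).
    + by rewrite /nv.
    + move=> r w h; apply: (step_noout sa r w); case: h => h;
        [left; apply/(stepER sb)|right; apply/(stepEW sb)]; by left.
    + move=> p n n' /hV [h1 h2] le E; rewrite /nv in E; case: E => Ep En; subst p n'.
      have h3 : aV A' (Some (lpid a, n)).
        by apply/(stepV' sa); split=> //; apply/(stepV sb); left.
      by have := next_gt (dag_fin (dagX sa)) h3; rewrite ltnNge le.
  apply: (@mk_step _ a Z A'' (nv a A') (fun r => lastw r (aEW A')) dZ (dagX sb)).
  + rewrite {1}/nv; congr (Some (_, _)); apply: nextidx_ext => n.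
    rewrite hV (stepV' sa) (stepV' sb); split=> [[h ne]|[[h _] ne]]; split=> //; split=> //.
    by rewrite /nv => -[E _]; exact: pab E.
  + move=> r hr; apply: lastw_ext => x y; rewrite hEW (stepEW' sa) (stepEW' sb).
    split=> [[h ne]|[[h _] ne]]; split=> //; split=> // E.
    by apply: (dab' r hr); apply: (step_labW sb x); rewrite -E.
  + exact: wra.
  + move=> x; rewrite hV; apply: uM => // ->; apply/(stepV' sb); split=> //.
    by apply/(stepV sa); right.
  + move=> e; rewrite hER; apply: uM.
    * move=> h E; have h1 : aER A e by apply/(stepER sb); left.
      case/(stepER sa): h1 => // h1; exfalso; exact: ((stepER' sa e).1 h1).2 E.
    * move=> m; have h1 : aER A e by apply/(stepER sa); right.
      apply/(stepER' sb); split=> //; case: m => r _ -> /=; exact: ab.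
  + move=> e; rewrite hEW; apply: uM.
    * move=> h E; have h1 : aEW A e by apply/(stepEW sb); left.
      case/(stepEW sa): h1 => // h1; exfalso; exact: ((stepEW' sa e).1 h1).2 E.
    * move=> m; have h1 : aEW A e by apply/(stepEW sa); right.
      apply/(stepEW' sb); split=> //; case: m => r _ -> /=; exact: ab.
Qed.
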